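(* Let $W_{(\alpha,\beta)}=(T_1,T_2)$ be a commuting 2-variable weighted shift and let $L=\begin{pmatrix} T_1^*T_1 & T_2^*T_1\\ T_1^*T_2 & T_2^*T_2\end{pmatrix}$. Then the following are equivalent: (a) $L\ge0$; (b) $\alpha_{\mathbf{k}+\varepsilon_2}\beta_{\mathbf{k}+\varepsilon_1}\le\alpha_{\mathbf{k}+\varepsilon_1}\beta_{\mathbf{k}+\varepsilon_2}$ for all $\mathbf{k}\in\mathbb{Z}_+^2$; (c) $\gamma_{\mathbf{k}+\varepsilon_1+\varepsilon_2}^2\le\gamma_{\mathbf{k}+2\varepsilon_1}\gamma_{\mathbf{k}+2\varepsilon_2}$ for all $\mathbf{k}\in\mathbb{Z}_+^2$.
   Context: A 2-variable weighted shift $W_{(\alpha,\beta)}=(T_1,T_2)$ on $\ell^2(\mathbb{Z}_+^2)$ (orthonormal basis $\{e_{\mathbf{k}}\}$) is given by bounded positive weights via $T_1e_{\mathbf{k}}=\alpha_{\mathbf{k}}e_{\mathbf{k}+\varepsilon_1}$, $T_2e_{\mathbf{k}}=\beta_{\mathbf{k}}e_{\mathbf{k}+\varepsilon_2}$, $\varepsilon_1=(1,0)$, $\varepsilon_2=(0,1)$; it is commuting iff $\beta_{\mathbf{k}+\varepsilon_1}\alpha_{\mathbf{k}}=\alpha_{\mathbf{k}+\varepsilon_2}\beta_{\mathbf{k}}$ for all $\mathbf{k}$. The moments are $\gamma_{(0,0)}=1$ and, for $\mathbf{k}=(k_1,k_2)$, $\gamma_{\mathbf{k}}=\alpha_{(0,0)}^2\cdots\alpha_{(k_1-1,0)}^2\,\beta_{(k_1,0)}^2\cdots\beta_{(k_1,k_2-1)}^2$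 (empty products equal $1$). *)

(* Defs.v *)
From HB Require Import structures.
From mathcomp Require Import all_boot all_order all_algebra.
From mathcomp Require Import all_classical all_reals topology normedtype sequences.
From mathcomp Require Import complex.
Set Implicit Arguments. Unset Strict Implicit. Unset Printing Implicit Defensive.
Import Order.TTheory GRing.Theory Num.Theory numFieldNormedType.Exports.
Local Open Scope ring_scope.

(* Vectors of l^2(Z_+^2) over the complex field R[i]:
   x : nat * nat -> R[i], x (k1,k2) = <x, e_(k1,k2)>. *)
Section TwoVar.
Variable R : realType.
Local Notation C := R[i].

Definition vec := nat * nat -> C.

Definition psum (f : nat * nat -> C) (N : nat) : C :=
  \sum_(i < N) \sum_(j < N) f (i : nat, j : nat).

Definition sqnorm (z : C) : R := complex.Re z ^+ 2 + complex.Im z ^+ 2.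

Definition in_l2 (x : vec) : Prop :=
  exists M : R, forall N : nat,
    \sum_(i < N) \sum_(j < N) sqnorm (x (i : nat, j : nat)) <= M.

Definition ip (u v : vec) : C :=
  let S := psum (fun k => u k * (v k)^*)%C in
  (limn (fun N : nat => (complex.Re (S N) : R)) +i* limn (fun N : nat => (complex.Im (S N) : R)))%C.

(* the weighted shifts: T1 e_k = alpha_k e_(k+eps1), T2 e_k = beta_k e_(k+eps2) *)
Definition shift1 (alpha : nat * nat -> R) (x : vec) : vec :=
  fun k => match k with
           | (i.+1, j) => ((alpha (i, j))%:C * x (i, j))%C
           | _ => 0
           end.

Definition shift2 (beta : nat * nat -> R) (x : vec) : vec :=
  fun k => match k with
           | (i, j.+1) => ((beta (i, j))%:C * x (i, j))%C
           | _ => 0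
           end.

Definition commuting_2var_shift (alpha beta : nat * nat -> R) : Prop :=
  [/\ forall k, 0 < alpha k,
      forall k, 0 < beta k,
      exists M : R, forall k, alpha k <= M /\ beta k <= M
    & forall k1 k2, beta (k1.+1, k2) * alpha (k1, k2)
                    = alpha (k1, k2.+1) * beta (k1, k2)].

(* <L (x,y), (x,y)> for L = [[T1*T1, T2*T1],[T1*T2, T2*T2]] on l^2 (+) l^2,
   with the adjoints moved across the inner product:
   <T1*T1 x + T2*T1 y, x> + <T1*T2 x + T2*T2 y, y>
   = <T1 x,T1 x> + <T1 y,T2 x> + <T2 x,T1 y> + <T2 y,T2 y>. *)
Definition Lform (alpha beta : nat * nat -> R) (x y : vec) : C :=
  let T1 := shift1 alpha in let T2 := shift2 beta in
  ip (T1 x) (T1 x) + ip (T1 y) (T2 x) + ip (T2 x) (T1 y) + ip (T2 y) (T2 y).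

Definition L_pos (alpha beta : nat * nat -> R) : Prop :=
  forall x y : vec, in_l2 x -> in_l2 y -> 0 <= Lform alpha beta x y.

Definition gamma (alpha beta : nat * nat -> R) (k1 k2 : nat) : R :=
  (\prod_(i < k1) alpha (i : nat, 0%N) ^+ 2) *
  (\prod_(j < k2) beta (k1, j : nat) ^+ 2).

End TwoVar.

(* Main.v *)
Require Import Defs.
From HB Require Import structures.
From mathcomp Require Import all_boot all_order all_algebra.
From mathcomp Require Import all_classical all_reals topology normedtype sequences.
From mathcomp Require Import complex.
From mathcomp Require Import ring lra.
Import Order.TTheory GRing.Theory Num.Theory numFieldNormedType.Exports.
Local Open Scope ring_scope.

Section Aux.
Variable R : realType.
Local Notation C := R[i].
Local Open Scope complex_scope.

Lemma ReD (u v : C) : complex.Re (u + v) = complex.Re u + complex.Re v.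
Proof. by case: u; case: v. Qed.
Lemma ImD (u v : C) : complex.Im (u + v) = complex.Im u + complex.Im v.
Proof. by case: u; case: v. Qed.
Lemma ReMJ (u v : C) : complex.Re (u * v^*) =
  complex.Re u * complex.Re v + complex.Im u * complex.Im v.
Proof. by case: u => a b; case: v => c d /=; ring. Qed.
Lemma ImMJ (u v : C) : complex.Im (u * v^*) =
  complex.Im u * complex.Re v - complex.Re u * complex.Im v.
Proof. by case: u => a b; case: v => c d /=; ring. Qed.
Lemma ReMC (a : R) (u : C) : complex.Re (a%:C * u) = a * complex.Re u.
Proof. by case: u => c d /=; ring. Qed.
Lemma ImMC (a : R) (u : C) : complex.Im (a%:C * u) = a * complex.Im u.
Proof. by case: u => c d /=; ring. Qed.

Lemma Re_sum I (r : seq I) (P : pred I) (F : I -> C) :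
  complex.Re (\sum_(i <- r | P i) F i) = \sum_(i <- r | P i) complex.Re (F i).
Proof. by apply: (big_morph _ ReD). Qed.
Lemma Im_sum I (r : seq I) (P : pred I) (F : I -> C) :
  complex.Im (\sum_(i <- r | P i) F i) = \sum_(i <- r | P i) complex.Im (F i).
Proof. by apply: (big_morph _ ImD). Qed.

Lemma Re_psum (f : nat * nat -> C) N : complex.Re (psum f N) =
  \sum_(i < N) \sum_(j < N) complex.Re (f (i : nat, j : nat)).
Proof. rewrite /psum Re_sum; apply: eq_bigr => i _; exact: Re_sum. Qed.
Lemma Im_psum (f : nat * nat -> C) N : complex.Im (psum f N) =
  \sum_(i < N) \sum_(j < N) complex.Im (f (i : nat, j : nat)).
Proof. rewrite /psum Im_sum; apply: eq_bigr => i _; exact: Im_sum. Qed.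

Lemma widen_le (f : nat -> R) n m : (forall i, 0 <= f i) -> (n <= m)%N ->
  \sum_(i < n) f i <= \sum_(i < m) f i.
Proof.
move=> f0 /subnK <-; elim: (m - n)%N => [|k IH] //.
rewrite addSn big_ord_recr /=; exact: ler_wpDr.
Qed.

Lemma shift_le (a : nat) : forall (f : nat -> R) n m, (forall i, 0 <= f i) ->
  (n + a <= m)%N -> \sum_(i < n) f (i + a)%N <= \sum_(i < m) f i.
Proof.
elim: a => [|a IH] f n m f0 nm.
  rewrite (eq_bigr (fun i : 'I_n => f i)); last by move=> i _; rewrite addn0.
  by rewrite addn0 in nm; exact: widen_le.
case: m nm => [|m]; first by rewrite addnS.
rewrite addnS ltnS => nm.
rewrite big_ord_recl; apply: ler_wpDl => //.
rewrite (eq_bigr (fun i : 'I_n => f (i + a).+1)); last by move=> i _; rewrite addnS.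
exact: (IH (fun i => f i.+1)).
Qed.

Lemma sq_shift_le (f : nat * nat -> R) a b n m : (forall k, 0 <= f k) ->
  (n + a <= m)%N -> (n + b <= m)%N ->
  \sum_(i < n) \sum_(j < n) f ((i + a)%N, (j + b)%N) <=
  \sum_(i < m) \sum_(j < m) f (i : nat, j : nat).
Proof.
move=> f0 ha hb.
apply: (le_trans _ (@shift_le a (fun i => \sum_(j < m) f (i, j : nat)) n m _ ha)).
  apply: ler_sum => i _.
  exact: (@shift_le b (fun j => f ((i + a)%N, j))).
by move=> i; apply: sumr_ge0.
Qed.

Lemma sq_mono (f : nat * nat -> R) n m : (forall k, 0 <= f k) -> (n <= m)%N ->
  \sum_(i < n) \sum_(j < n) f (i : nat, j : nat) <=
  \sum_(i < m) \sum_(j < m) f (i : nat, j : nat).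
Proof.
move=> f0 nm; have := @sq_shift_le f 0 0 n m f0; rewrite !addn0 => /(_ nm nm).
congr (_ <= _); apply: eq_bigr => i _; apply: eq_bigr => j _; by rewrite !addn0.
Qed.


Definition sqs (f : nat * nat -> R) N := \sum_(i < N) \sum_(j < N) f (i : nat, j : nat).

Lemma sqs_mono (f : nat * nat -> R) : (forall k, 0 <= f k) ->
  {homo sqs f : n m / (n <= m)%N >-> n <= m}.
Proof. by move=> f0 n m nm; exact: sq_mono. Qed.

Lemma sqs_cvg_pos (f : nat * nat -> R) B : (forall k, 0 <= f k) ->
  (forall N, sqs f N <= B) -> cvgn (sqs f).
Proof.
move=> f0 fB; apply: nondecreasing_is_cvgn; first exact: sqs_mono.
by exists B => _ [N _ <-]; exact: fB.
Qed.

Lemma sqsD (f g : nat * nat -> R) N : sqs (fun k => f k + g k) N = sqs f N + sqs g N.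
Proof. rewrite /sqs -big_split; apply: eq_bigr => i _; by rewrite -big_split. Qed.

Lemma sqs_le (f g : nat * nat -> R) N : (forall k, f k <= g k) -> sqs f N <= sqs g N.
Proof. move=> fg; apply: ler_sum => i _; apply: ler_sum => j _; exact: fg. Qed.

Lemma sqs_cvg (t : nat * nat -> R) B :
  (forall N, sqs (fun k => `|t k|) N <= B) -> cvgn (sqs t).
Proof.
move=> tB.
have -> : sqs t = (sqs (fun k => `|t k| + t k)) - sqs (fun k => `|t k|).
  apply: funext => N; rewrite !fctE sqsD; ring.
apply: is_cvgB; last first.
  exact: (sqs_cvg_pos _ B (fun k => normr_ge0 (t k)) tB).
idtac.
apply: (sqs_cvg_pos _ (B + B)).
  by move=> k; have := ler_norm (- t k); rewrite normrN; lra.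
move=> N; rewrite sqsD; apply: lerD => //; apply: le_trans (tB N).
apply: sqs_le => k; exact: ler_norm.
Qed.

Lemma sqnormMC (a : R) (z : C) : sqnorm (a%:C * z) = a ^+ 2 * sqnorm z.
Proof. by case: z => c d; rewrite /sqnorm /=; ring. Qed.

Lemma sqnorm_ge0 (z : C) : 0 <= sqnorm z.
Proof. rewrite /sqnorm; apply: addr_ge0; exact: sqr_ge0. Qed.

Lemma sqnorm0 : sqnorm (0 : C) = 0.
Proof. by rewrite /sqnorm /=; ring. Qed.

Lemma l2_bound0 (x : vec R) : in_l2 x -> exists M, 0 <= M /\ forall N, sqs (fun k => sqnorm (x k)) N <= M.
Proof. by case=> M hM; exists M; split => //; have := hM 0%N; rewrite big_ord0. Qed.

Lemma l2_shift1 (al : nat * nat -> R) M x : (forall k, 0 < al k) -> (forall k, al k <= M) ->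
  in_l2 x -> in_l2 (shift1 al x).
Proof.
move=> a0 aM /l2_bound0 [Mx [Mx0 hx]]; exists (M ^+ 2 * Mx) => -[|n].
  by rewrite big_ord0; apply: mulr_ge0 => //; exact: sqr_ge0.
rewrite big_ord_recl /= big1 ?add0r; last by move=> j _; exact: sqnorm0.
apply: le_trans (_ : M ^+ 2 * sqs (fun k => sqnorm (x k)) n.+1 <= _); last first.
  by apply: ler_wpM2l => //; exact: sqr_ge0.
rewrite /sqs mulr_sumr.
apply: (le_trans _ (@widen_le (fun i => M ^+ 2 * \sum_(j < n.+1) sqnorm (x (i, j : nat))) n n.+1 _ _)) => //; last first.
  by move=> i; apply: mulr_ge0; [exact: sqr_ge0| apply: sumr_ge0 => j _; exact: sqnorm_ge0].
apply: ler_sum => i _; rewrite mulr_sumr; apply: ler_sum => j _.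
rewrite /bump /= sqnormMC; apply: ler_wpM2r; first exact: sqnorm_ge0.
have := a0 (i : nat, j : nat); have := aM (i : nat, j : nat); nra.
Qed.

Lemma l2_shift2 (be : nat * nat -> R) M x : (forall k, 0 < be k) -> (forall k, be k <= M) ->
  in_l2 x -> in_l2 (shift2 be x).
Proof.
move=> a0 aM /l2_bound0 [Mx [Mx0 hx]]; exists (M ^+ 2 * Mx) => N.
apply: le_trans (_ : M ^+ 2 * sqs (fun k => sqnorm (x k)) N <= _); last first.
  by apply: ler_wpM2l => //; exact: sqr_ge0.
rewrite /sqs mulr_sumr; apply: ler_sum => i _; rewrite mulr_sumr.
case: N i => [|n] i; first by case: i.
rewrite big_ord_recl /= sqnorm0 add0r.
apply: (le_trans _ (@widen_le (fun j => M ^+ 2 * sqnorm (x (i : nat, j))) n n.+1 _ _)) => //; last first.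
  by move=> j; apply: mulr_ge0; [exact: sqr_ge0| exact: sqnorm_ge0].
apply: ler_sum => j _.
rewrite /bump /= sqnormMC; apply: ler_wpM2r; first exact: sqnorm_ge0.
have := a0 (i : nat, j : nat); have := aM (i : nat, j : nat); nra.
Qed.

Lemma bnd4 (a b c d : R) : `|a * c + b * d| <= (a ^+ 2 + b ^+ 2) + (c ^+ 2 + d ^+ 2).
Proof.
rewrite ler_norml; apply/andP; split.
  have := sqr_ge0 (a + c); have := sqr_ge0 (b + d); nra.
have := sqr_ge0 (a - c); have := sqr_ge0 (b - d); nra.
Qed.

Lemma ip_cvg (u v : vec R) : in_l2 u -> in_l2 v ->
  cvgn (fun N => complex.Re (psum (fun k => u k * (v k)^*) N)) /\
  cvgn (fun N => complex.Im (psum (fun k => u k * (v k)^*) N)).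
Proof.
move=> /l2_bound0 [Mu [_ hu]] /l2_bound0 [Mv [_ hv]].
have bnd : forall N, sqs (fun k => sqnorm (u k) + sqnorm (v k)) N <= Mu + Mv.
  by move=> N; rewrite sqsD; exact: lerD.
split.
  have -> : (fun N => complex.Re (psum (fun k => u k * (v k)^*) N)) =
    sqs (fun k => complex.Re (u k * (v k)^*)) by apply: funext => N; rewrite Re_psum.
  apply: (sqs_cvg _ (Mu + Mv)) => N; apply: le_trans (bnd N); apply: sqs_le => k.
  by rewrite ReMJ /sqnorm; apply: bnd4.
have -> : (fun N => complex.Im (psum (fun k => u k * (v k)^*) N)) =
  sqs (fun k => complex.Im (u k * (v k)^*)) by apply: funext => N; rewrite Im_psum.
apply: (sqs_cvg _ (Mu + Mv)) => N; apply: le_trans (bnd N); apply: sqs_le => k.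
rewrite ImMJ /sqnorm.
have := bnd4 (complex.Im (u k)) (- complex.Re (u k)) (complex.Re (v k)) (complex.Im (v k)).
by rewrite sqrrN mulNr addrC (addrC (_ ^+ 2)).
Qed.


Section Gam.
Variables (al be : nat * nat -> R).
Hypothesis a0 : forall k, 0 < al k.
Hypothesis b0 : forall k, 0 < be k.
Hypothesis comm : forall k1 k2, be (k1.+1, k2) * al (k1, k2) = al (k1, k2.+1) * be (k1, k2).

Lemma G2 k1 k2 : gamma al be k1 k2.+1 = gamma al be k1 k2 * be (k1, k2) ^+ 2.
Proof. by rewrite /gamma big_ord_recr /= mulrA. Qed.

Lemma G1 k1 k2 : gamma al be k1.+1 k2 = gamma al be k1 k2 * al (k1, k2) ^+ 2.
Proof.
elim: k2 => [|k2 IH].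
  by rewrite /gamma !big_ord0 big_ord_recr /= !mulr1.
rewrite G2 IH G2.
set g := gamma al be k1 k2.
apply: (@eq_trans _ _ (g * (be (k1.+1, k2) * al (k1, k2)) ^+ 2)); first ring.
rewrite comm; ring.
Qed.

Lemma gamma_gt0 k1 k2 : 0 < gamma al be k1 k2.
Proof.
by rewrite /gamma; apply: mulr_gt0; apply: prodr_gt0 => i _; apply: exprn_gt0.
Qed.

Lemma b_iff_c k1 k2 :
  (al (k1, k2.+1) * be (k1.+1, k2) <= al (k1.+1, k2) * be (k1, k2.+1)) =
  (gamma al be k1.+1 k2.+1 ^+ 2 <= gamma al be k1.+2 k2 * gamma al be k1 k2.+2).
Proof.
set g := gamma al be k1 k2.
set D := (g * al (k1, k2) * be (k1, k2)) ^+ 2.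
have eL : gamma al be k1.+1 k2.+1 ^+ 2 = D * (al (k1, k2.+1) * be (k1.+1, k2)) ^+ 2.
  rewrite G2 G1 -/g.
  apply: (@eq_trans _ _ (g ^+ 2 * al (k1, k2) ^+ 2 * be (k1.+1, k2) ^+ 2 *
     (be (k1.+1, k2) * al (k1, k2)) ^+ 2)); first ring.
  by rewrite comm /D; ring.
have eR : gamma al be k1.+2 k2 * gamma al be k1 k2.+2 = D * (al (k1.+1, k2) * be (k1, k2.+1)) ^+ 2.
  by rewrite G1 G1 G2 G2 -/g /D; ring.
have D0 : 0 < D.
  by apply: exprn_gt0; apply: mulr_gt0; [apply: mulr_gt0; [exact: gamma_gt0|]|].
rewrite eL eR ler_pM2l // ler_sqr // qualifE /=; apply: ltW; exact: mulr_gt0.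
Qed.

End Gam.


Lemma Re_sqs (f : nat * nat -> C) N : complex.Re (psum f N) = sqs (fun k => complex.Re (f k)) N.
Proof. exact: Re_psum. Qed.
Lemma Im_sqs (f : nat * nat -> C) N : complex.Im (psum f N) = sqs (fun k => complex.Im (f k)) N.
Proof. exact: Im_psum. Qed.

Lemma ge0_eq (x y : R) : 0 <= x -> x = y -> 0 <= y.
Proof. by move=> h <-. Qed.

Lemma sqs_delta (f : nat * nat -> R) p q N :
  (forall k, k != (p, q) -> f k = 0) -> (p < N)%N -> (q < N)%N -> sqs f N = f (p, q).
Proof.
move=> hf pN qN; rewrite /sqs (bigD1 (Ordinal pN)) //= [X in _ + X]big1 ?addr0; last first.
  move=> i hi; apply: big1 => j _; apply: hf; rewrite xpair_eqE.
  by apply/nandP; left; apply: contra hi => /eqP e; apply/eqP/val_inj.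
rewrite (bigD1 (Ordinal qN)) //= [X in _ + X]big1 ?addr0 // => j hj; apply: hf; rewrite xpair_eqE.
by apply/nandP; right; apply: contra hj => /eqP e; apply/eqP/val_inj.
Qed.

Definition dl (k0 : nat * nat) (c : C) : vec R := fun k => if k == k0 then c else 0.

Lemma dl_at k0 c : dl k0 c k0 = c.
Proof. by rewrite /dl eqxx. Qed.

Lemma dl_supp k0 c k : k != k0 -> dl k0 c k = 0.
Proof. by rewrite /dl => /negbTE ->. Qed.

Lemma l2_dl k0 c : in_l2 (dl k0 c).
Proof.
exists (sqnorm c) => N.
have f0 : forall k, 0 <= sqnorm (dl k0 c k) by move=> k; exact: sqnorm_ge0.
apply: (le_trans (@sq_mono (fun k => sqnorm (dl k0 c k)) N _ f0 (leq_maxl N (maxn k0.1 k0.2).+1))).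
case: k0 f0 => p q f0.
change (sqs (fun k => sqnorm (dl (p, q) c k)) (maxn N (maxn p q).+1) <= sqnorm c).
rewrite (@sqs_delta (fun k => sqnorm (dl (p, q) c k)) p q) ?dl_at //.
- by move=> k hk; rewrite dl_supp // sqnorm0.
- by rewrite leq_max ltnS leq_max leqnn orbT.
- by rewrite leq_max ltnS leq_max leqnn !orbT.
Qed.

Lemma ip_delta (u v : vec R) p q : (forall k, k != (p, q) -> u k * (v k)^* = 0) ->
  complex.Re (ip u v) = complex.Re (u (p, q) * (v (p, q))^*).
Proof.
move=> h; rewrite /ip /=.
apply: (@lim_near_cst _ (@Rhausdorff R)).
near=> N; rewrite Re_sqs.
rewrite (@sqs_delta (fun k => complex.Re (u k * (v k)^*)) p q) //.
- by move=> k hk; rewrite h.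
- near: N; exact: nbhs_infty_gt.
- near: N; exact: nbhs_infty_gt.
Unshelve. all: by end_near.
Qed.

Lemma lim4_ge0 (u1 u2 u3 u4 : nat -> R) : cvgn u1 -> cvgn u2 -> cvgn u3 -> cvgn u4 ->
  (forall N, 0 <= u1 N.+1 + u2 N + u3 N + u4 N.+1) ->
  0 <= limn u1 + limn u2 + limn u3 + limn u4.
Proof.
move=> c1 c2 c3 c4 h.
have c1' : cvgn (fun N => u1 N.+1).
  by move: c1 => /cvg_ex [l hl]; apply/cvg_ex; exists l; rewrite (cvg_shiftS u1).
have c4' : cvgn (fun N => u4 N.+1).
  by move: c4 => /cvg_ex [l hl]; apply/cvg_ex; exists l; rewrite (cvg_shiftS u4).
have -> : limn u1 = limn (fun N => u1 N.+1).
  by apply/esym/cvg_lim => //; rewrite (cvg_shiftS u1).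
have -> : limn u4 = limn (fun N => u4 N.+1).
  by apply/esym/cvg_lim => //; rewrite (cvg_shiftS u4).
have c12 : cvgn ((fun N => u1 N.+1) + u2) by apply: is_cvgD.
have c123 : cvgn ((fun N => u1 N.+1) + u2 + u3) by apply: is_cvgD.
have c1234 : cvgn ((fun N => u1 N.+1) + u2 + u3 + (fun N => u4 N.+1)) by apply: is_cvgD.
rewrite -limD // -limD // -limD //.
apply: limr_ge => //.
by apply: nearW => N; rewrite !fctE; exact: h.
Qed.

Lemma lim4_eq0 (u1 u2 u3 u4 : nat -> R) : cvgn u2 -> cvgn u3 ->
  (forall N, u1 N = 0) -> (forall N, u4 N = 0) -> (forall N, u2 N + u3 N = 0) ->
  limn u1 + limn u2 + limn u3 + limn u4 = 0.
Proof.
move=> c2 c3 h1 h4 h23.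
have e1 : limn u1 = 0.
  by rewrite (_ : u1 = fun _ => 0) ?lim_cst //; apply: funext.
have e4 : limn u4 = 0.
  by rewrite (_ : u4 = fun _ => 0) ?lim_cst //; apply: funext.
have e23 : limn u2 + limn u3 = 0.
  rewrite -limD // (_ : u2 + u3 = fun _ => 0) ?lim_cst //.
  by apply: funext => N; rewrite fctE.
rewrite e1 e4; lra.
Qed.


Lemma sh1_supp (al : nat * nat -> R) (x : vec R) p q :
  (forall k, k != (p, q) -> x k = 0) -> forall k, k != (p.+1, q) -> shift1 al x k = 0.
Proof.
move=> hx [[|a] b] //= hk; rewrite hx ?mulr0 //.
Qed.

Lemma sh2_supp (be : nat * nat -> R) (x : vec R) p q :
  (forall k, k != (p, q) -> x k = 0) -> forall k, k != (p, q.+1) -> shift2 be x k = 0.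
Proof.
move=> hx [a [|b]] //= hk; rewrite hx ?mulr0 //.
Qed.

Lemma prod_supp_l (u v : vec R) k0 : (forall k, k != k0 -> u k = 0) ->
  forall k, k != k0 -> u k * (v k)^* = 0.
Proof. by move=> h k hk; rewrite h // mul0r. Qed.

Lemma a_to_b (al be : nat * nat -> R) : (forall k, 0 < al k) -> (forall k, 0 < be k) ->
  L_pos al be -> forall k1 k2 : nat,
  al (k1, k2.+1) * be (k1.+1, k2) <= al (k1.+1, k2) * be (k1, k2.+1).
Proof.
move=> a0 b0 Lp i j.
set x := dl (i.+1, j) (be (i, j.+1))%:C.
set y := dl (i, j.+1) (- al (i.+1, j))%:C.
have := Lp x y (l2_dl _ _) (l2_dl _ _); rewrite lecE => /andP [_].
rewrite /Lform !ReD.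
have sx := @dl_supp (i.+1, j) (be (i, j.+1))%:C.
have sy := @dl_supp (i, j.+1) (- al (i.+1, j))%:C.
rewrite (ip_delta _ _ (i.+2) j (prod_supp_l _ _ _ (sh1_supp al x _ _ sx))).
rewrite (ip_delta _ _ (i.+1) j.+1 (prod_supp_l _ _ _ (sh1_supp al y _ _ sy))).
rewrite (ip_delta _ _ (i.+1) j.+1 (prod_supp_l _ _ _ (sh2_supp be x _ _ sx))).
rewrite (ip_delta _ _ i j.+2 (prod_supp_l _ _ _ (sh2_supp be y _ _ sy))).
rewrite /= /x /y !dl_at !ReMJ !ReMC !ImMC /=.
have := a0 (i.+1, j); have := b0 (i, j.+1); have := a0 (i, j.+1); have := b0 (i.+1, j).
set p := al (i.+1, j); set q := be (i, j.+1); set s := al (i, j.+1); set t := be (i.+1, j).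
move=> t0 s0 q0 p0 H.
have pq0 : 0 < p * q by apply: mulr_gt0.
rewrite -subr_ge0; rewrite -(pmulr_rge0 _ pq0).
nra.
Qed.


Lemma key (p q s t a b c d : R) : 0 < p -> 0 < q -> 0 < s -> 0 < t -> s * t <= p * q ->
  0 <= (p * a) * (p * a) + (p * b) * (p * b) + ((s * c) * (t * a) + (s * d) * (t * b))
       + ((t * a) * (s * c) + (t * b) * (s * d)) + ((q * c) * (q * c) + (q * d) * (q * d)).
Proof.
move=> p0 q0 s0 t0 h.
have pq0 : 0 < p * q by apply: mulr_gt0.
rewrite -(pmulr_rge0 _ pq0).
apply: (@ge0_eq (s * t * ((p * a + q * c) ^+ 2 + (p * b + q * d) ^+ 2) +
   (p * q - s * t) * (p ^+ 2 * (a ^+ 2 + b ^+ 2) + q ^+ 2 * (c ^+ 2 + d ^+ 2)))); last by ring.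
apply: addr_ge0; apply: mulr_ge0.
- by apply: ltW; apply: mulr_gt0.
- by apply: addr_ge0; apply: sqr_ge0.
- by rewrite subr_ge0.
- by apply: addr_ge0; apply: mulr_ge0; try apply: sqr_ge0; apply: addr_ge0; apply: sqr_ge0.
Qed.

Lemma sqs0f (f : nat * nat -> R) : sqs f 0 = 0.
Proof. by rewrite /sqs big_ord0. Qed.

Lemma sqs_inner (f : nat * nat -> R) n : (forall j, f (0%N, j) = 0) -> (forall i, f (i, 0%N) = 0) ->
  sqs f n.+1 = \sum_(i < n) \sum_(j < n) f (i.+1, j.+1).
Proof.
move=> h0 h1; rewrite /sqs big_ord_recl /= big1 ?add0r; last by move=> j _; exact: h0.
apply: eq_bigr => i _; rewrite big_ord_recl /= h1 add0r; apply: eq_bigr => j _; by [].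
Qed.

Lemma ReMJ_ge0 (u : C) : 0 <= complex.Re (u * u^*).
Proof. by rewrite ReMJ; apply: addr_ge0; rewrite -expr2; apply: sqr_ge0. Qed.

Lemma fin_ineq (al be : nat * nat -> R) (x y : vec R) :
  (forall k, 0 < al k) -> (forall k, 0 < be k) ->
  (forall k1 k2 : nat, al (k1, k2.+1) * be (k1.+1, k2) <= al (k1.+1, k2) * be (k1, k2.+1)) ->
  forall N,
  0 <= complex.Re (psum (fun k => shift1 al x k * (shift1 al x k)^*) N.+1)
     + complex.Re (psum (fun k => shift1 al y k * (shift2 be x k)^*) N)
     + complex.Re (psum (fun k => shift2 be x k * (shift1 al y k)^*) N)
     + complex.Re (psum (fun k => shift2 be y k * (shift2 be y k)^*) N.+1).
Proof.
move=> a0 b0 hb N; rewrite !Re_sqs.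
have nn : forall u : vec R, forall k, 0 <= complex.Re (u k * (u k)^*) by move=> u k; exact: ReMJ_ge0.
case: N => [|n].
  rewrite !sqs0f !addr0; apply: addr_ge0; apply: sumr_ge0 => i _; apply: sumr_ge0 => j _; exact: nn.
rewrite (@sqs_inner (fun k => complex.Re (shift1 al y k * (shift2 be x k)^*))); first last.
- by move=> i; rewrite ReMJ /= !mulr0 addr0.
- by move=> j; rewrite ReMJ /= !mul0r addr0.
rewrite (@sqs_inner (fun k => complex.Re (shift2 be x k * (shift1 al y k)^*))); first last.
- by move=> i; rewrite ReMJ /= !mul0r addr0.
- by move=> j; rewrite ReMJ /= !mulr0 addr0.
have hA := @sq_shift_le (fun k => complex.Re (shift1 al x k * (shift1 al x k)^*)) 2 0 n n.+2 (nn _)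
  (eq_leq (addn2 n)) (ltac:(by rewrite addn0 -addn2 leq_addr) : (n + 0 <= n.+2)%N).
have hD := @sq_shift_le (fun k => complex.Re (shift2 be y k * (shift2 be y k)^*)) 0 2 n n.+2 (nn _)
  (ltac:(by rewrite addn0 -addn2 leq_addr) : (n + 0 <= n.+2)%N) (eq_leq (addn2 n)).
apply: (le_trans _ (lerD (lerD (lerD hA (lexx _)) (lexx _)) hD)).
rewrite -!big_split; apply: sumr_ge0 => i _; rewrite -!big_split; apply: sumr_ge0 => j _ /=.
rewrite !addn2 !addn0 /= !ReMJ !ReMC !ImMC.
have hk := (key _ _ _ _ (complex.Re (x (i.+1, j : nat))) (complex.Im (x (i.+1, j : nat)))
   (complex.Re (y (i : nat, j.+1))) (complex.Im (y (i : nat, j.+1)))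
   (a0 (i.+1, j : nat)) (b0 (i : nat, j.+1)) (a0 (i : nat, j.+1)) (b0 (i.+1, j : nat)) (hb i j)).
apply: (le_trans hk); rewrite le_eqVlt; apply/orP; left; apply/eqP; ring.
Qed.


Lemma sqs_eq0 (f : nat * nat -> R) N : (forall k, f k = 0) -> sqs f N = 0.
Proof. by move=> h; rewrite /sqs big1 // => i _; rewrite big1. Qed.

Lemma b_to_a (al be : nat * nat -> R) M :
  (forall k, 0 < al k) -> (forall k, 0 < be k) ->
  (forall k, al k <= M /\ be k <= M) ->
  (forall k1 k2 : nat, al (k1, k2.+1) * be (k1.+1, k2) <= al (k1.+1, k2) * be (k1, k2.+1)) ->
  L_pos al be.
Proof.
move=> a0 b0 hM hb x y hx hy.
have aM : forall k, al k <= M by move=> k; case: (hM k).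
have bM : forall k, be k <= M by move=> k; case: (hM k).
have l1x := l2_shift1 al M x a0 aM hx.
have l1y := l2_shift1 al M y a0 aM hy.
have l2x := l2_shift2 be M x b0 bM hx.
have l2y := l2_shift2 be M y b0 bM hy.
have [c1r c1i] := ip_cvg _ _ l1x l1x.
have [c2r c2i] := ip_cvg _ _ l1y l2x.
have [c3r c3i] := ip_cvg _ _ l2x l1y.
have [c4r c4i] := ip_cvg _ _ l2y l2y.
rewrite /Lform /= lecE; apply/andP; split.
  rewrite !ImD /=; apply/eqP.
  apply: lim4_eq0 => // N; rewrite ?Im_sqs.
  - by apply: sqs_eq0 => k; rewrite ImMJ; ring.
  - by apply: sqs_eq0 => k; rewrite ImMJ; ring.
  - by rewrite -sqsD; apply: sqs_eq0 => k; rewrite !ImMJ; ring.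
rewrite !ReD /=.
apply: lim4_ge0 => //; exact: fin_ineq.
Qed.

End Aux.

Theorem proposition3p2 (R : realType) (alpha beta : nat * nat -> R) :
  commuting_2var_shift alpha beta ->
  [<-> L_pos alpha beta;
       forall k1 k2 : nat,
         alpha (k1, k2.+1) * beta (k1.+1, k2) <= alpha (k1.+1, k2) * beta (k1, k2.+1);
       forall k1 k2 : nat,
         gamma alpha beta k1.+1 k2.+1 ^+ 2
           <= gamma alpha beta k1.+2 k2 * gamma alpha beta k1 k2.+2].
Proof.
case=> a0 b0 [M hM] comm.
tfae.
- exact: a_to_b.
- by move=> hb k1 k2; rewrite -b_iff_c //; exact: hb.
- move=> hc; apply: (@b_to_a R _ _ M) => // k1 k2; rewrite b_iff_c //; exact: hc.
Qed.
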